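(* Let $n_1,\dots,n_k\ge1$ with $n=\sum_in_i>k$, $n_{\min}=\min_in_i$, $n_{\max}=\max_in_i$. Let $B_k\in\mathbb{R}^{k\times k}$ be symmetric with nonnegative entries, $[B_k]_{ii}=\alpha_{ii}$ and $[B_k]_{ij}=\beta_{ij}$ for $i\ne j$. Let $$P=\begin{bmatrix}\mathbf{1}_{n_1}&0&\cdots&0\\0&\mathbf{1}_{n_2}&\cdots&0\\\vdots&&\ddots&\vdots\\0&0&\cdots&\mathbf{1}_{n_k}\end{bmatrix}\in\mathbb{R}^{n\times k},\quad A_{\mathrm{blk}}=PB_kP^T,\quad L_{\mathrm{blk}}=\mathrm{diag}\{A_{\mathrm{blk}}\mathbf{1}_n\}-A_{\mathrm{blk}}.$$ Suppose $$\Delta:=\min_i\alpha_{ii}-\frac{2n_{\max}}{n_{\min}}\max_i\sum_{j\ne i}\beta_{ij}>0.$$ Define $\tilde B_k=B_k\,\mathrm{diag}\{n_i\}_{i=1}^k$ and $\tilde L_k=\mathrm{diag}\{\tilde B_k\mathbf{1}_k\}-\tilde B_k$, and let $v_i(\tilde L_k)$ be a right eigenvector of $\tilde L_k$ associated with its $i$-th smallest eigenvalue $\lambda_i(\tilde L_k)$. Then: (1) for $i=1,\dots,k$, $\lambda_i(L_{\mathrm{blk}})=\lambda_i(\tilde L_k)$ and $Pv_i(\tilde L_k)$ is an eigenvector of $L_{\mathrm{blk}}$ associated with $\lambda_i(L_{\mathrm{blk}})$ (in particular $L_{\mathrm{blk}}$ is $k$-block-ideal); (2) $\lambda_{k+1}(L_{\mathrm{blk}})\ge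 b_{\min}n_{\min}$, where $b_{\min}=\min_i[B_k\mathbf{1}_k]_i$ is the minimum row sum of $B_k$; (3) $\lambda_{k+1}(L_{\mathrm{blk}})-\lambda_k(L_{\mathrm{blk}})\ge\Delta n_{\min}$.
   Context: $\lambda_i(\cdot)$ denotes the $i$-th smallest eigenvalue (the eigenvalues of $\tilde L_k$ are real). A Laplacian $L$ is $k$-block-ideal with respect to a partition $\{\mathcal{I}_1,\dots,\mathcal{I}_k\}$ of $[n]$ if there is an invertible $S\in\mathbb{R}^{k\times k}$ with $[v_1(L)\ \cdots\ v_k(L)]=[\mathbf{1}_{\mathcal{I}_1}\ \cdots\ \mathbf{1}_{\mathcal{I}_k}]S$, where $v_i(L)$ are orthonormal eigenvectors for the $k$ smallest eigenvalues and $\mathbf{1}_\mathcal{I}$ is the indicator vector of $\mathcal{I}$; here the partition is into consecutive blocks of sizes $n_1,\dots,n_k$. *)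

(* Defs.v *)
From HB Require Import structures.
From mathcomp Require Import all_boot all_order all_algebra.
From mathcomp Require Import reals.
Set Implicit Arguments. Unset Strict Implicit. Unset Printing Implicit Defensive.
Import Order.TTheory GRing.Theory Num.Theory.
Local Open Scope ring_scope.

Section Defs.
Variable R : realType.

(* minimum / maximum of a finite family f i, i : 'I_k (value 0 if k = 0,
   a case excluded by the hypotheses of the theorem) *)
Definition min_over (k : nat) (f : 'I_k -> R) : R :=
  let s := map f (enum 'I_k) in foldr Num.min (head 0 s) s.
Definition max_over (k : nat) (f : 'I_k -> R) : R :=
  let s := map f (enum 'I_k) in foldr Num.max (head 0 s) s.

Definition blockP (n k : nat) (nv : 'I_k -> nat) : 'M[R]_(n, k) :=
  \matrix_(r < n, c < k)
    (((\sum_(j < k | (j < c)%N) nv j <= r)%N &&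
      (r < \sum_(j < k | (j <= c)%N) nv j)%N)%:R).

Definition laplacian (m : nat) (A : 'M[R]_m) : 'M[R]_m :=
  diag_mx (\row_i \sum_j A i j) - A.

(* s is the list of all eigenvalues of A (with algebraic multiplicity),
   all real, sorted in nondecreasing order: s`_i = lambda_{i+1}(A) *)
Definition sorted_spectrum (m : nat) (A : 'M[R]_m) (s : seq R) : Prop :=
  [/\ size s = m, sorted <=%R s & char_poly A = \prod_(x <- s) ('X - x%:P)].

Definition eigenvector (m : nat) (A : 'M[R]_m) (l : R) (v : 'cV[R]_m) : Prop :=
  v != 0 /\ A *m v = l *: v.

Definition block_ideal (n k : nat) (L : 'M[R]_n) (Pind : 'M[R]_(n, k)) : Prop :=
  exists s : seq R, sorted_spectrum L s /\
  exists V : 'M[R]_(n, k),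
    [/\ V^T *m V = 1%:M,
        (forall j : 'I_k, L *m col j V = s`_j *: col j V) &
        exists2 S : 'M[R]_k, S \in unitmx & V = Pind *m S].
End Defs.

(* Main.v *)
Require Import Defs.
From HB Require Import structures.
From mathcomp Require Import all_boot all_order all_algebra.
From mathcomp Require Import reals.
From mathcomp Require Import ring lra zify.
Set Implicit Arguments. Unset Strict Implicit. Unset Printing Implicit Defensive.
Import Order.TTheory GRing.Theory Num.Theory.
Local Open Scope ring_scope.
Section CP.
Variable R : fieldType.

Lemma char_poly_similar n (T G A : 'M[R]_n) :
  T \in unitmx -> T *m G = A *m T -> char_poly G = char_poly A.
Proof.
move=> Tu hTG; pose Tp := map_mx (@polyC R) T.
have h : Tp *m char_poly_mx G = char_poly_mx A *m Tp.
  rewrite /char_poly_mx mulmxBr mulmxBl -!map_mxM hTG scalar_mxC.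
  by [].
have := congr1 determinant h; rewrite !det_mulmx [X in _ = X]mulrC.
have : \det Tp != 0.
  by rewrite det_map_mx polyC_eq0 -unitfE -unitmxE.
by move=> /mulfI H /H.
Qed.

Lemma char_poly_block n1 n2 (A : 'M[R]_n1) (D : 'M[R]_n2) :
  char_poly (block_mx A 0 0 D) = char_poly A * char_poly D.
Proof.
rewrite /char_poly /char_poly_mx -(det_ublock _ 0); congr determinant.
rewrite map_block_mx !map_mx0 (scalar_mx_block n1 n2) opp_block_mx add_block_mx.
by rewrite !oppr0 !addr0.
Qed.

Lemma char_poly_diag n (d : 'rV[R]_n) :
  char_poly (diag_mx d) = \prod_i ('X - (d 0 i)%:P).
Proof.
by rewrite char_poly_trig ?diag_mx_is_trig //; apply: eq_bigr => i _; rewrite mxE eqxx mulr1n.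
Qed.

Lemma char_poly_scalar1 (a : R) : char_poly (a%:M : 'M[R]_1) = 'X - a%:P.
Proof.
by rewrite char_poly_trig ?scalar_mx_is_trig // big_ord1 mxE eqxx mulr1n.
Qed.
End CP.

Lemma sum_deltaL (R : pzRingType) n (F : 'I_n -> R) a :
  \sum_i (i == a)%:R * F i = F a.
Proof.
by rewrite (bigD1 a) //= eqxx mul1r big1 ?addr0 // => i /negbTE ->; rewrite mul0r.
Qed.

Lemma sum_deltaR (R : pzRingType) n (F : 'I_n -> R) a :
  \sum_i F i * (i == a)%:R = F a.
Proof.
by rewrite (bigD1 a) //= eqxx mulr1 big1 ?addr0 // => i /negbTE ->; rewrite mulr0.
Qed.

Section CPL.
Variable R : numFieldType.

Lemma charpoly_L k m (cb : 'I_(k + m) -> 'I_k) (rep : 'I_k -> 'I_(k + m))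
  (hrep : forall c, cb (rep c) = c) (d : 'I_k -> R) (M : 'M[R]_k) :
  let P := \matrix_(r < k + m, c < k) ((cb r == c)%:R : R) in
  exists e : 'I_m -> 'I_k,
  char_poly (diag_mx (\row_r d (cb r)) - P *m M *m P^T) =
  char_poly (diag_mx (\row_c d c) - M *m (P^T *m P)) * \prod_t ('X - (d (e t))%:P).
Proof.
move=> P.
pose nc c := \sum_(r < k + m) ((cb r == c)%:R : R).
have ncgt0 : forall c, 0 < nc c.
  move=> c; rewrite /nc (bigD1 (rep c)) //= hrep eqxx.
  by apply: ltr_pwDl => //; apply: sumr_ge0 => i _; apply: ler0n.
have hN : P^T *m P = diag_mx (\row_c nc c).
  apply/matrixP => c c'; rewrite !mxE.
  under eq_bigr => r _ do rewrite !mxE.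
  case: eqVneq => [<-|ne]; rewrite ?mulr1n ?mulr0n.
    by apply: eq_bigr => r _; rewrite -natrM; case: (cb r == c).
  apply: big1 => r _; case: (eqVneq (cb r) c) => [hc|]; last by rewrite mul0r.
  by rewrite hc (negbTE ne) mulr0.
pose NR := [set r | r != rep (cb r)].
have hcardNR : #|NR| = m.
  have hC : ~: NR = rep @: [set: 'I_k].
    apply/setP => r; rewrite !inE negbK; apply/idP/imsetP.
      by move/eqP => ->; exists (cb r).
    by move=> [c _ ->]; rewrite hrep.
  have := cardsC NR; rewrite hC card_imset; last exact: (can_inj hrep).
  by rewrite cardsT !card_ord; lia.
pose nr (t : 'I_m) : 'I_(k + m) := enum_val (cast_ord (esym hcardNR) t).
have hnrNR : forall t, nr t != rep (cb (nr t)).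
  by move=> t; have := enum_valP (cast_ord (esym hcardNR) t); rewrite inE.
have hnr_inj : injective nr.
  by move=> t t' /enum_val_inj /cast_ord_inj.
pose e t := cb (nr t).
exists e.
pose W := \matrix_(i < k + m, t < m) ((i == nr t)%:R - (i == rep (e t))%:R : R).
have hPW : P^T *m W = 0.
  apply/matrixP => c t; rewrite !mxE.
  under eq_bigr => r _ do rewrite !mxE mulrBr.
  by rewrite sumrB sum_deltaR sum_deltaR /e hrep subrr.
set Lt' := diag_mx (\row_c d c) - M *m (P^T *m P).
set L := diag_mx (\row_r d (cb r)) - P *m M *m P^T.
have hDP : diag_mx (\row_r d (cb r)) *m P = P *m diag_mx (\row_c d c).
  rewrite mul_diag_mx mul_mx_diag; apply/matrixP => r c; rewrite !mxE.
  by case: eqVneq => [->|]; rewrite ?mulr1 ?mul1r ?mulr0 ?mul0r.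
have hLP : L *m P = P *m Lt'.
  by rewrite /L /Lt' mulmxBl mulmxBr hDP !mulmxA.
have hLW : L *m W = W *m diag_mx (\row_t d (e t)).
  rewrite /L mulmxBl -!mulmxA hPW mulmx0 mulmx0 subr0 mul_diag_mx mul_mx_diag.
  apply/matrixP => i t; rewrite !mxE.
  case: eqVneq => [->|_]; case: eqVneq => [hi|_] //=; rewrite ?subr0 ?sub0r ?subrr ?mulr0 ?mul0r //.
  - by rewrite /e mulr1 mul1r.
  - by rewrite hi hrep mulrN1 mulN1r.
pose T := row_mx P W.
pose G := block_mx Lt' 0 0 (diag_mx (\row_t d (e t))).
have hTG : T *m G = L *m T.
  by rewrite /T /G mul_row_block mul_mx_row !mulmx0 addr0 add0r hLP hLW.
pose Y := diag_mx (\row_c (nc c)^-1) *m P^T.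
pose Sel := \matrix_(t < m, l < k + m) ((l == nr t)%:R : R).
pose E := \matrix_(t < m, c < k) ((e t == c)%:R : R).
pose Z := Sel - E *m Y.
have hYP : Y *m P = 1%:M.
  rewrite /Y -mulmxA hN mulmx_diag; apply/matrixP => c c'; rewrite !mxE.
  rewrite mulVf; last by rewrite gt_eqF ?ncgt0. by [].
have hYW : Y *m W = 0 by rewrite /Y -mulmxA hPW mulmx0.
have hSP : Sel *m P = E.
  apply/matrixP => t c; rewrite !mxE.
  under eq_bigr => r _ do rewrite !mxE.
  by rewrite sum_deltaL.
have hSW : Sel *m W = 1%:M.
  apply/matrixP => t t'; rewrite !mxE.
  under eq_bigr => r _ do rewrite !mxE.
  rewrite sum_deltaL (inj_eq hnr_inj).
  have -> : (nr t == rep (e t')) = false.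
    by apply/negbTE/eqP => h; have := hnrNR t; rewrite {2}h hrep -h eqxx.
  by rewrite subr0.
have hTinv : col_mx Y Z *m T = 1%:M.
  rewrite /T mul_col_row hYP hYW /Z !mulmxBl -!(mulmxA E) hYP hYW mulmx0 subr0 mulmx1 hSP hSW subrr.
  by rewrite -scalar_mx_block.
have [_ Tu] := mulmx1_unit hTinv.
rewrite -(char_poly_similar Tu hTG) /G char_poly_block char_poly_diag.
by congr (_ * _); apply: eq_bigr => t _; rewrite mxE.
Qed.
End CPL.
Section Spec.
Variable R : rcfType.

Lemma dot_sqr n (w : 'cV[R]_n) : (w^T *m w) 0 0 = \sum_i w i 0 ^+ 2.
Proof. by rewrite !mxE; apply: eq_bigr => i _; rewrite !mxE expr2. Qed.

Lemma dot_ge0 n (w : 'cV[R]_n) : 0 <= (w^T *m w) 0 0.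
Proof. by rewrite dot_sqr; apply: sumr_ge0 => i _; apply: sqr_ge0. Qed.

Lemma dot_eq0 n (w : 'cV[R]_n) : ((w^T *m w) 0 0 == 0) = (w == 0).
Proof.
apply/idP/idP; last by move/eqP->; rewrite mulmx0 mxE.
rewrite dot_sqr psumr_eq0; last by move=> i _; apply: sqr_ge0.
move/allP => H; apply/eqP/matrixP => i j; rewrite (ord1 j) mxE.
by have := H i (mem_index_enum i); rewrite /= sqrf_eq0 => /eqP.
Qed.

Lemma householder m (u : 'cV[R]_m.+1) : u^T *m u = 1%:M ->
  exists Q : 'M[R]_m.+1, [/\ Q^T = Q, Q *m Q = 1%:M & Q *m delta_mx ord0 ord0 = u].
Proof.
move=> hu; set e : 'cV[R]_m.+1 := delta_mx ord0 ord0.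
have [->|neu] := eqVneq u e.
  by exists 1%:M; rewrite trmx1 mulmx1 mul1mx.
set w := u - e.
have wn0 : w != 0 by rewrite subr_eq0.
set c := (w^T *m w) 0 0.
have cn0 : c != 0 by rewrite /c dot_eq0.
have hww : w^T *m w = c%:M by apply: mx11_scalar.
have hue : u^T *m e = (u ord0 0)%:M.
  by rewrite [LHS]mx11_scalar !mxE (bigD1 ord0) //= big1 ?addr0 => [|i /negbTE];
     rewrite !mxE ?eqxx ?mulr1 // => ->; rewrite mulr0.
have hee : e^T *m e = 1%:M.
  by rewrite [LHS]mx11_scalar !mxE (bigD1 ord0) //= big1 ?addr0 => [|i /negbTE];
     rewrite !mxE ?eqxx ?mulr1 // => ->; rewrite mulr0.
have heu : e^T *m u = (u ord0 0)%:M.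
  by rewrite -[e^T *m u]trmxK trmx_mul trmxK hue tr_scalar_mx.
have htr : w^T = u^T - e^T by rewrite /w linearB.
have hc : c = 2 - 2 * u ord0 0.
  have : w^T *m w = (2 - 2 * u ord0 0)%:M.
    rewrite htr mulmxBl /w !mulmxBr hu hue heu hee.
    apply/matrixP => i j; rewrite !mxE; case: (i == j) => /=; rewrite ?mulr1n ?mulr0n; last by rewrite !subrr.
    by rewrite mulr2n mulrDl mul1r; ring.
  by rewrite hww => /matrixP /(_ 0 0); rewrite !mxE eqxx !mulr1n.
exists (1%:M - (2 / c) *: (w *m w^T)); split.
- by rewrite linearB /= linearZ /= trmx1 trmx_mul trmxK.
- rewrite mulmxBl !mulmxBr mul1mx mulmx1 -!scalemxAl -!scalemxAr.
  rewrite mul1mx !mulmxA -[w *m w^T *m w]mulmxA hww mul_mx_scalar -scalemxAl !scalerA.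
  have -> : 2 / c * (2 / c * c) = 2 * (2 / c) by field.
  apply/matrixP => i j; rewrite !mxE; ring.
- rewrite mulmxBl mul1mx -scalemxAl -mulmxA.
  have -> : w^T *m e = (u ord0 0 - 1)%:M.
    rewrite htr mulmxBl hue hee; apply/matrixP => i j; rewrite !mxE.
    by case: (i == j); rewrite ?mulr1n ?mulr0n ?subrr.
  rewrite mul_mx_scalar scalerA.
  have -> : 2 / c * (u ord0 0 - 1) = -1.
    rewrite hc; have : 2 - 2 * u ord0 0 != 0 by rewrite -hc.
    by move=> h; field.
  by rewrite scaleN1r opprK /w addrC subrK.
Qed.

Lemma diag_cons m (l : R) (s : seq R) :
  diag_mx (\row_(i < 1 + m) (l :: s)`_i) =
  block_mx l%:M 0 0 (diag_mx (\row_(i < m) s`_i)).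
Proof.
apply/matrixP => i j.
rewrite -[i](@splitK 1 m) -[j](@splitK 1 m).
case: (split i) => [i'|i']; case: (split j) => [j'|j'];
  rewrite ?block_mxEul ?block_mxEur ?block_mxEdl ?block_mxEdr !mxE /=.
- by rewrite !ord1 eqxx.
- by rewrite -(inj_eq val_inj) /= ord1.
- by rewrite -(inj_eq val_inj) /= ord1.
- by rewrite -(inj_eq val_inj) /= eqn_add2l add0n.
Qed.

Lemma spectral m (A : 'M[R]_m) (s : seq R) : A^T = A ->
  char_poly A = \prod_(x <- s) ('X - x%:P) ->
  exists U : 'M[R]_m, U^T *m U = 1%:M /\ A *m U = U *m diag_mx (\row_i s`_i).
Proof.
elim: m A s => [|m IH] A s hsym hcp.
  by exists 1%:M; split; rewrite [LHS]flatmx0 [RHS]flatmx0.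
have hsz : size s = m.+1.
  by have := congr1 (fun p : {poly R} => size p) hcp; rewrite size_char_poly size_prod_XsubC => -[].
move: hcp hsz; case: s => [//|l s'] hcp [hsz].
have : eigenvalue A l by rewrite eigenvalue_root_char hcp root_prod_XsubC mem_head.
case/eigenvalueP => v hv vn0.
set x := v^T.
have hAx : A *m x = l *: x by rewrite /x -hsym -trmx_mul hv linearZ.
have xn0 : x != 0 by rewrite /x trmx_eq0.
set nv := (x^T *m x) 0 0.
have nvgt0 : 0 < nv by rewrite lt_def dot_eq0 xn0 dot_ge0.
set r := Num.sqrt nv.
have rgt0 : 0 < r by rewrite sqrtr_gt0.
set u := r^-1 *: x.
have hu : u^T *m u = 1%:M.
  rewrite [LHS]mx11_scalar dot_sqr.
  have -> : \sum_i u i 0 ^+ 2 = r^-1 ^+ 2 * nv.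
    rewrite /nv dot_sqr mulr_sumr; apply: eq_bigr => i _.
    by rewrite /u mxE exprMn.
  by rewrite exprVn /r sqr_sqrtr ?(ltW nvgt0) // mulVf ?gt_eqF.
have hAu : A *m u = l *: u by rewrite /u -scalemxAr hAx !scalerA mulrC.
have [Q [hQt hQQ hQe]] := householder hu.
have [C defC] : {C : 'M[R]_(1 + m) | C = Q *m A *m Q} by exists (Q *m A *m Q).
have hQC : Q *m C = A *m Q by rewrite defC !mulmxA hQQ mul1mx.
have hCt : C^T = C by rewrite defC !trmx_mul hQt hsym mulmxA.
have hCe : forall i : 'I_m.+1, C i ord0 = l * (i == ord0)%:R.
  have : C *m (delta_mx ord0 ord0 : 'cV[R]_m.+1) = l *: delta_mx ord0 ord0.
    by rewrite defC -!mulmxA hQe hAu -scalemxAr -hQe mulmxA hQQ mul1mx.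
  move/matrixP => H i; have := H i ord0; rewrite -colE !mxE => ->.
  by rewrite eqxx andbT.
have hCb : C = block_mx l%:M 0 0 (drsubmx C).
  rewrite -[C in LHS]submxK; congr block_mx.
  - apply/matrixP => i j; rewrite !ord1 !mxE /=.
    have -> : @lshift 1 m 0 = ord0 :> 'I_m.+1 by apply: val_inj.
    by rewrite hCe eqxx mulr1 mulr1n.
  - apply/matrixP => i j; rewrite !mxE /= -[C]hCt mxE.
    have -> : @lshift 1 m i = ord0 :> 'I_m.+1 by apply: val_inj; rewrite ord1.
    by rewrite (hCe (rshift 1 j : 'I_m.+1)) mulr0.
  - apply/matrixP => i j; rewrite !mxE /=.
    have -> : @lshift 1 m j = ord0 :> 'I_m.+1 by apply: val_inj; rewrite ord1.
    by rewrite (hCe (rshift 1 i : 'I_m.+1)) mulr0.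
set A' := drsubmx C.
have hA't : A'^T = A' by rewrite /A' trmx_drsub hCt.
have Qu : Q \in unitmx by case: (mulmx1_unit hQQ).
have hcpC : char_poly C = char_poly A := char_poly_similar Qu hQC.
have hcpA' : char_poly A' = \prod_(y <- s') ('X - y%:P).
  move: hcpC; rewrite hcp big_cons hCb char_poly_block char_poly_scalar1.
  by apply: mulfI; rewrite polyXsubC_eq0.
have [U' [hU'1 hU'2]] := IH A' s' hA't hcpA'.
have [Bm defB] : {Bm : 'M[R]_(1 + m) | Bm = block_mx 1%:M 0 0 U'} by exists (block_mx 1%:M 0 0 U').
have hB1 : Bm^T *m Bm = 1%:M.
  rewrite defB tr_block_mx mulmx_block !trmx0 trmx1 ?mulmx0 ?mul0mx ?mulmx1 ?mul1mx.
  by rewrite !addr0 !add0r hU'1 -scalar_mx_block.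
have hB2 : C *m Bm = Bm *m diag_mx (\row_(i < 1 + m) (l :: s')`_i).
  rewrite diag_cons hCb defB -/A' !mulmx_block ?mulmx0 ?mul0mx ?mulmx1 ?mul1mx ?addr0 ?add0r hU'2.
  by [].
exists (Q *m Bm); split.
  rewrite trmx_mul hQt -mulmxA [Q *m (Q *m _)]mulmxA hQQ mul1mx.
  exact: hB1.
rewrite mulmxA -hQC -!mulmxA; congr (Q *m _).
exact: hB2.
Qed.
End Spec.
Lemma sum_interval n o e : (o <= e <= n)%N ->
  (\sum_(r < n) ((o <= r < e)%N : nat))%N = (e - o)%N.
Proof.
move=> /andP[hoe hen].
rewrite -(big_mkord xpredT (fun r => ((o <= r < e)%N : nat))).
rewrite (big_cat_nat (n := o) (leq0n o) (leq_trans hoe hen)) /=.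
rewrite (big_cat_nat (n := e) hoe hen) /=.
rewrite big1_seq; last by move=> i /andP[_]; rewrite mem_index_iota => /andP[_ hi]; rewrite leqNgt hi.
rewrite [X in (_ + (_ + X))%N]big1_seq; last first.
  by move=> i /andP[_]; rewrite mem_index_iota => /andP[hi _]; rewrite ltnNge hi andbF.
rewrite add0n addn0 (eq_big_nat _ _ (F2 := fun _ => 1%N)); last first.
  by move=> i ->.
by rewrite sum_nat_const_nat muln1.
Qed.

Lemma blockP_part (R : realType) k n (nv : 'I_k -> nat) : n = (\sum_i nv i)%N ->
  exists cb : 'I_n -> 'I_k, (forall r c, blockP R n nv r c = (cb r == c)%:R) /\
     (forall c, (\sum_(r < n) ((cb r == c) : nat))%N = nv c).
Proof.
move=> hn.
pose o (c : 'I_k) := (\sum_(j < k | (j < c)%N) nv j)%N.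
pose e (c : 'I_k) := (\sum_(j < k | (j <= c)%N) nv j)%N.
have he : forall c, e c = (o c + nv c)%N.
  move=> c; rewrite /e /o (bigD1 c) //= addnC; congr (_ + _)%N; apply: eq_bigl => j.
  by rewrite ltn_neqAle andbC.
have heo : forall c c' : 'I_k, (c < c')%N -> (e c <= o c')%N.
  move=> c c' hcc; rewrite /e /o big_mkcond [X in (_ <= X)%N]big_mkcond /=.
  apply: leq_sum => j _; case: ifP => // hj; by rewrite (leq_ltn_trans hj hcc).
have hen : forall c, (e c <= n)%N.
  move=> c; rewrite hn /e big_mkcond /=; apply: leq_sum => j _; by case: ifP.
have huniq : forall (r : nat) (c c' : 'I_k), (o c <= r < e c)%N -> (o c' <= r < e c')%N -> c = c'.
  move=> r c c' /andP[h1 h2] /andP[h3 h4].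
  case: (ltngtP c c') => [lt|lt|eq]; last exact: val_inj.
    by have := heo _ _ lt; lia.
  by have := heo _ _ lt; lia.
have hsum : forall c, (\sum_(r < n) ((o c <= r < e c)%N : nat))%N = nv c.
  move=> c; rewrite sum_interval; first by rewrite he addKn.
  by rewrite hen andbT he leq_addr.
have hex : forall r : 'I_n, exists c, (o c <= r < e c)%N.
  move=> r0; apply/existsP; apply: contraT => /existsPn hno.
  pose F (r : 'I_n) := (\sum_c ((o c <= r < e c)%N : nat))%N.
  have hF1 : forall r, (F r <= 1)%N.
    move=> r; case: (boolP [exists c, (o c <= r < e c)%N]) => [/existsP [c hc]|/existsPn hc].
      rewrite /F (bigD1 c) //= hc big1 // => c' hc'.
      by apply/eqP; rewrite eqb0; apply: contra hc' => h; rewrite (huniq _ _ _ hc h).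
    by rewrite /F big1 // => c _; rewrite (negbTE (hc c)).
  have hF0 : F r0 = 0%N by rewrite /F big1 // => c _; rewrite (negbTE (hno c)).
  have : (\sum_r F r)%N = n.
    rewrite /F exchange_big /=.
    by rewrite [RHS]hn; apply: eq_bigr => c _; apply: hsum.
  rewrite (bigD1 r0) //= hF0 add0n => hs.
  have : (\sum_(r | r != r0) F r <= \sum_(r | r != r0) 1)%N by apply: leq_sum => r _; apply: hF1.
  rewrite hs sum1_card cardC1 card_ord => h; have := ltn_ord r0; lia.
have [cb hcb] := fin_all_exists hex.
have hQ : forall (r : 'I_n) c, (o c <= r < e c)%N = (cb r == c).
  move=> r c; apply/idP/idP; last by move/eqP <-; apply: hcb.
  by move=> h; rewrite (huniq _ _ _ (hcb r) h).
exists cb; split.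
  by move=> r c; rewrite mxE -hQ.
by move=> c; rewrite -hsum; apply: eq_bigr => r _; rewrite hQ.
Qed.

Section MinMax.
Variable R : realType.

Lemma foldr_min_le (s : seq R) a x : x \in s -> foldr Num.min a s <= x.
Proof.
elim: s => [//|y s IH]; rewrite inE /= => /orP[/eqP ->|/IH h].
  by rewrite ge_min lexx.
by rewrite ge_min h orbT.
Qed.

Lemma foldr_max_ge (s : seq R) a x : x \in s -> x <= foldr Num.max a s.
Proof.
elim: s => [//|y s IH]; rewrite inE /= => /orP[/eqP ->|/IH h].
  by rewrite le_max lexx.
by rewrite le_max h orbT.
Qed.

Lemma foldr_min_ge (s : seq R) a c : c <= a -> (forall x, x \in s -> c <= x) -> c <= foldr Num.min a s.
Proof.
move=> ha; elim: s => [//|y s IH] H /=.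
by rewrite le_min H ?mem_head // IH // => x hx; apply: H; rewrite inE hx orbT.
Qed.

Lemma min_over_le k (f : 'I_k -> R) i : min_over f <= f i.
Proof. by apply: foldr_min_le; apply: map_f; rewrite mem_enum. Qed.

Lemma max_over_ge k (f : 'I_k -> R) i : f i <= max_over f.
Proof. by apply: foldr_max_ge; apply: map_f; rewrite mem_enum. Qed.

Lemma min_over_ge k (f : 'I_k -> R) c : (0 < k)%N -> (forall i, c <= f i) -> c <= min_over f.
Proof.
move=> k0 H; rewrite /min_over.
have Hs : forall x, x \in map f (enum 'I_k) -> c <= x by move=> x /mapP [i _ ->].
apply: foldr_min_ge => //.
case: k k0 f H Hs => // k _ f H Hs.
have : ord0 \in enum 'I_k.+1 by rewrite mem_enum.
by case: (enum 'I_k.+1) Hs => //= y s Hs _; apply: Hs; rewrite mem_head.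
Qed.
End MinMax.

Lemma gersh (R : realType) k (B : 'M[R]_k) (nv : 'I_k -> nat) (x : R) :
  B^T = B -> (forall i j, 0 <= B i j) ->
  root (char_poly (laplacian (B *m diag_mx (\row_i (nv i)%:R)))) x ->
  x <= 2 * max_over (fun i => (nv i)%:R : R) * max_over (fun i => \sum_(j < k | j != i) B i j).
Proof.
move=> hsym hnn; rewrite -eigenvalue_root_char => /eigenvalueP [v hv vn0].
have hB : forall i j, B i j = B j i by move=> i j; rewrite -{1}hsym mxE.
set nmax := max_over _; set mb := max_over _.
have hBt : forall i j, (B *m diag_mx (\row_i (nv i)%:R)) i j = B i j * (nv j)%:R.
  by move=> i j; rewrite mul_mx_diag !mxE.
move: (B *m diag_mx _) hBt hv => Bt hBt hv.
have hLt : forall i j, laplacian Bt i j = (\sum_l B i l * (nv l)%:R) *+ (i == j) - B i j * (nv j)%:R.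
  by move=> i j; rewrite /laplacian !mxE hBt; under eq_bigr do rewrite hBt.
have [i0 hi0] : exists i0, v 0 i0 != 0.
  apply/existsP; apply: contraR vn0 => /existsPn H; apply/eqP/matrixP => i j.
  by rewrite ord1 mxE; apply/eqP; rewrite -[_ == _]negbK H.
case: (@arg_maxP _ R _ i0 xpredT (fun j => `|v 0 j|) isT) => j _ hj.
have vj0 : 0 < `|v 0 j|.
  by apply: lt_le_trans (hj i0 isT); rewrite normr_gt0.
set a := \sum_(l | l != j) B j l * (nv l)%:R.
set bj := \sum_(l | l != j) B j l.
have heq : (x - a) * v 0 j = - ((nv j)%:R * \sum_(i | i != j) v 0 i * B j i).
  have := congr1 (fun M : 'rV[R]_k => M 0 j) hv; rewrite /= !mxE.
  rewrite (bigD1 j) //= hLt eqxx mulr1n.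
  rewrite (bigD1 j) //= -/a.
  rewrite (eq_bigr (fun i => - (v 0 i * B j i * (nv j)%:R))); last first.
    by move=> i /negbTE hi; rewrite hLt hi mulr0n sub0r (hB i j) mulrN mulrA.
  rewrite sumrN -mulr_suml => h.
  rewrite mulrBl -h; ring.
have hle : `|x - a| * `|v 0 j| <= (nv j)%:R * bj * `|v 0 j|.
  rewrite -normrM heq normrN normrM ger0_norm ?ler0n // -mulrA ler_wpM2l ?ler0n //.
  rewrite /bj mulr_suml; apply: (le_trans (ler_norm_sum _ _ _)).
  apply: ler_sum => i _; rewrite normrM (ger0_norm (hnn _ _)) mulrC.
  by apply: ler_wpM2l => //; apply: hj.
have hxa : x - a <= (nv j)%:R * bj.
  apply: le_trans (ler_norm _) _.
  by rewrite -(ler_pM2r vj0).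
have hbj : 0 <= bj by apply: sumr_ge0 => i _.
have ha : a <= nmax * bj.
  rewrite /bj mulr_sumr; apply: ler_sum => l _; rewrite mulrC.
  by apply: ler_wpM2r => //; apply: (max_over_ge (fun i => (nv i)%:R : R)).
have hnj : (nv j)%:R <= nmax by apply: (max_over_ge (fun i => (nv i)%:R : R)).
have hbm : bj <= mb by apply: (max_over_ge (fun i => \sum_(j < k | j != i) B i j)).
have hn0 : 0 <= nmax by apply: le_trans hnj.
have : (nv j)%:R * bj <= nmax * bj by apply: ler_wpM2r.
have : nmax * bj <= nmax * mb by apply: ler_wpM2l.
lra.
Qed.

Lemma sum_deltaL' (R : pzRingType) n (F : 'I_n -> R) a :
  \sum_i (a == i)%:R * F i = F a.
Proof. by rewrite -(sum_deltaL F a); apply: eq_bigr => i _; rewrite eq_sym. Qed.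

Lemma sum_deltaR' (R : pzRingType) n (F : 'I_n -> R) a :
  \sum_i F i * (a == i)%:R = F a.
Proof. by rewrite -(sum_deltaR F a); apply: eq_bigr => i _; rewrite eq_sym. Qed.

Lemma sorted_cat_le (R : realType) (s1 s2 : seq R) : sorted <=%R s1 -> sorted <=%R s2 ->
  (forall x y, x \in s1 -> y \in s2 -> x <= y) -> sorted <=%R (s1 ++ s2).
Proof.
case: s1 => [//|x s1] /=; rewrite cat_path => -> /= h2 H.
rewrite path_sortedE; last exact: le_trans.
rewrite h2 andbT; apply/allP => y hy; apply: H => //; apply: mem_last.
Qed.

Lemma LP_lemma (R : numFieldType) k n (cb : 'I_n -> 'I_k) (d : 'I_k -> R) (M : 'M[R]_k) :
  let P := \matrix_(r < n, c < k) ((cb r == c)%:R : R) in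
  (diag_mx (\row_r d (cb r)) - P *m M *m P^T) *m P = P *m (diag_mx (\row_c d c) - M *m (P^T *m P)).
Proof.
move=> P.
have hDP : diag_mx (\row_r d (cb r)) *m P = P *m diag_mx (\row_c d c).
  rewrite mul_diag_mx mul_mx_diag; apply/matrixP => r c; rewrite !mxE.
  by case: eqVneq => [->|]; rewrite ?mulr1 ?mul1r ?mulr0 ?mul0r.
by rewrite mulmxBl mulmxBr hDP !mulmxA.
Qed.


Unset Implicit Arguments. Set Strict Implicit. Set Printing Implicit Defensive.

Theorem proposition10 (R : realType) (k n : nat) (nv : 'I_k -> nat)
  (B : 'M[R]_k)
  (hnv : forall i, (1 <= nv i)%N)
  (hn : n = (\sum_(i < k) nv i)%N)
  (hkn : (k < n)%N)
  (hBsym : B^T = B)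
  (hBnn : forall i j, 0 <= B i j) :
  let nmin := min_over (fun i => (nv i)%:R : R) in
  let nmax := max_over (fun i => (nv i)%:R : R) in
  let P := blockP R n nv in
  let Ablk := P *m B *m P^T in
  let Lblk := laplacian Ablk in
  let Delta := min_over (fun i => B i i)
               - 2 * nmax / nmin * max_over (fun i => \sum_(j < k | j != i) B i j) in
  let Bt := B *m diag_mx (\row_i (nv i)%:R) in
  let Lt := laplacian Bt in
  let bmin := min_over (fun i => \sum_j B i j) in
  0 < Delta ->
  forall (sL sT : seq R), sorted_spectrum Lblk sL -> sorted_spectrum Lt sT ->
  [/\ (forall i : 'I_k, sL`_i = sT`_i /\
        forall v : 'cV[R]_k, eigenvector Lt sT`_i v ->
          eigenvector Lblk sL`_i (P *m v)),
      block_ideal Lblk P,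
      bmin * nmin <= sL`_k &
      Delta * nmin <= sL`_k - sL`_k.-1].
Proof.
have [m hm] : exists m, n = (k + m)%N by exists (n - k)%N; lia.
rewrite hm in hn hkn *.
move=> nmin nmax P Ablk Lblk Delta Bt Lt bmin hD sL sT [hszL hsortL hcpL] [hszT hsortT hcpT].
have hm0 : (0 < m)%N by lia.
have [cb [hPcb hfib]] := @blockP_part R _ _ nv hn.
pose r0 : 'I_(k + m) := Ordinal (leq_ltn_trans (leq0n k) hkn).
have k0 : (0 < k)%N := leq_ltn_trans (leq0n _) (ltn_ord (cb r0)).
have hB : forall i j, B i j = B j i by move=> i j; rewrite -{1}hBsym mxE.
have hP : P = \matrix_(r, c) ((cb r == c)%:R : R).
  by apply/matrixP => r c; rewrite /P hPcb mxE.
have hnvR : forall c, \sum_r ((cb r == c)%:R : R) = (nv c)%:R.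
  by move=> c; rewrite -hfib natr_sum.
have hPM : forall p (M : 'M[R]_(k, p)) r c, (P *m M) r c = M (cb r) c.
  by move=> p M r c; rewrite hP mxE; under eq_bigr do rewrite mxE; rewrite sum_deltaL'.
have hN : P^T *m P = diag_mx (\row_c (nv c)%:R).
  apply/matrixP => c c'; rewrite hP !mxE.
  under eq_bigr => r _ do rewrite !mxE.
  case: eqVneq => [<-|ne]; rewrite ?mulr1n ?mulr0n.
    by rewrite -hnvR; apply: eq_bigr => r _; rewrite -natrM; case: (cb r == c).
  apply: big1 => r _; case: (eqVneq (cb r) c) => [hc|]; last by rewrite mul0r.
  by rewrite hc (negbTE ne) mulr0.
have hBt : forall i j, Bt i j = B i j * (nv j)%:R by move=> i j; rewrite /Bt mul_mx_diag !mxE.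
pose dd c := \sum_j Bt c j.
have hLt : Lt = diag_mx (\row_c dd c) - B *m (P^T *m P) by rewrite hN.
have hA : forall r s, Ablk r s = B (cb r) (cb s).
  move=> r s; rewrite /Ablk mxE; under eq_bigr do rewrite hPM mxE hP mxE.
  by rewrite sum_deltaR'.
have hrow : forall r, \sum_s Ablk r s = dd (cb r).
  move=> r; under eq_bigr do rewrite hA -(sum_deltaR' (fun c => B (cb r) c)).
  rewrite exchange_big /=; apply: eq_bigr => c _; rewrite -mulr_sumr hnvR hBt //.
have hL : Lblk = diag_mx (\row_r dd (cb r)) - P *m B *m P^T.
  rewrite /Lblk /laplacian; congr (diag_mx _ - _); apply/rowP => i; rewrite !mxE hrow.
  by [].
have hLP : Lblk *m P = P *m Lt.
  rewrite hL hLt hP; exact: (LP_lemma cb dd B).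
have /fin_all_exists [rep hrep] : forall c, exists r, cb r = c.
  move=> c.
  have : [exists r, cb r == c].
    apply: contraT => /existsPn H; have := hfib c; rewrite big1 => [h|r _].
      by have := hnv c; rewrite -h.
    by rewrite (negbTE (H r)).
  by case/existsP => r /eqP; exists r.
have := charpoly_L hrep dd B; rewrite /= -hP -hL -hLt => -[e he].
pose E := [seq dd (e t) | t <- enum 'I_m].
have hperm : perm_eq sL (sT ++ E).
  by apply: prod_XsubC_eq; rewrite big_cat /= -hcpL -hcpT he big_map enumT.
set ma := min_over (fun i => B i i).
set mb := max_over (fun i => \sum_(j < k | j != i) B i j).
have hnmin1 : 1 <= nmin.
  by apply: min_over_ge => // i; rewrite ler1n hnv.
have nmin_pos : 0 < nmin by apply: lt_le_trans hnmin1.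
have hnmin_nv : forall c, nmin <= (nv c)%:R.
  by move=> c; apply: (min_over_le (fun i => (nv i)%:R : R)).
have hDn : Delta * nmin = ma * nmin - 2 * nmax * mb.
  rewrite /Delta -/ma -/mb; field; by rewrite gt_eqF.
have hgap : 2 * nmax * mb < ma * nmin.
  have := mulr_gt0 hD nmin_pos; rewrite hDn; lra.
have hLam : forall x, x \in sT -> x <= 2 * nmax * mb.
  move=> x hx; apply: (@gersh R k B nv x hBsym hBnn).
  by rewrite -/Bt -/Lt hcpT root_prod_XsubC.
have hdd_a : forall c, ma * nmin <= dd c.
  move=> c; rewrite /dd (bigD1 c) //= hBt.
  have h1 : ma * nmin <= B c c * (nv c)%:R.
    apply: (@le_trans _ _ (B c c * nmin)).
      by apply: ler_wpM2r; [apply: ltW | apply: (min_over_le (fun i => B i i))].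
    by apply: ler_wpM2l.
  have h2 : 0 <= \sum_(j | j != c) Bt c j.
    by apply: sumr_ge0 => j _; rewrite hBt mulr_ge0.
  lra.
have hdd_b : forall c, bmin * nmin <= dd c.
  move=> c; apply: (@le_trans _ _ ((\sum_j B c j) * nmin)).
    by apply: ler_wpM2r; [apply: ltW | apply: (min_over_le (fun i => \sum_j B i j))].
  rewrite /dd mulr_suml; apply: ler_sum => j _; rewrite hBt.
  by apply: ler_wpM2l.
have hS2 : sorted <=%R (sT ++ sort <=%R E).
  apply: sorted_cat_le => //; first by apply: sort_sorted; exact: le_total.
  move=> x y hx; rewrite mem_sort => /mapP [t _ ->].
  have := hLam x hx; have := hdd_a (e t); lra.
have hsL : sL = sT ++ sort <=%R E.
  apply: (sorted_eq le_trans le_anti) => //.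
  by apply: (perm_trans hperm); rewrite perm_cat2l perm_sym perm_sort.
have hnthL : forall i, (i < k)%N -> sL`_i = sT`_i.
  by move=> i hi; rewrite hsL nth_cat hszT hi.
have [t ht] : exists t, sL`_k = dd (e t).
  have : sL`_k \in E.
    rewrite hsL nth_cat hszT ltnn subnn -(mem_sort <=%R); apply: mem_nth.
    by rewrite size_sort size_map size_enum_ord.
  by case/mapP => t _ ->; exists t.
have hk1 : sL`_k.-1 <= 2 * nmax * mb.
  have hk : (k.-1 < k)%N by rewrite ltn_predL.
  by rewrite hnthL //; apply: hLam; apply: mem_nth; rewrite hszT.
split.
- move=> i; split; first exact: hnthL (ltn_ord i).
  move=> v [vn0 hv]; split.
    apply: contra vn0 => /eqP h; apply/eqP/matrixP => c j.
    by have := congr1 (fun M : 'cV[R]_(k + m) => M (rep c) j) h; rewrite /= hPM hrep !mxE.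
  by rewrite mulmxA hLP -mulmxA hv -scalemxAr hnthL.
- exists sL; split; first by split.
  pose sq c := Num.sqrt ((nv c)%:R : R).
  have sqpos : forall c, 0 < sq c by move=> c; rewrite sqrtr_gt0 ltr0n hnv.
  have sq2 : forall c, sq c * sq c = (nv c)%:R by move=> c; rewrite -expr2 sqr_sqrtr ?ler0n.
  pose Nh := diag_mx (\row_c sq c).
  pose Nhi := diag_mx (\row_c (sq c)^-1).
  have hNiN : Nhi *m Nh = 1%:M.
    rewrite mulmx_diag; apply/matrixP => i j; rewrite !mxE mulVf //.
    by rewrite gt_eqF ?sqpos.
  have hNi_u : Nhi \in unitmx by case: (mulmx1_unit hNiN).
  have hNNN : Nhi *m diag_mx (\row_c (nv c)%:R) *m Nhi = 1%:M.
    rewrite !mulmx_diag; apply/matrixP => i j; rewrite !mxE -sq2.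
    have := sqpos i => hi.
    by rewrite [X in X *+ _ = _](_ : _ = 1) //; field; rewrite gt_eqF.
  have hconj : forall X : 'M[R]_k, forall i j, (Nh *m X *m Nhi) i j = sq i * X i j * (sq j)^-1.
    by move=> X i j; rewrite mul_mx_diag mul_diag_mx !mxE.
  have hLtE : forall i j, Lt i j = dd i *+ (i == j) - B i j * (nv j)%:R.
    by move=> i j; rewrite /Lt /laplacian !mxE; congr (_ - _); rewrite -hBt /Bt mxE.
  pose Ms := Nh *m Lt *m Nhi.
  have hMsym : Ms^T = Ms.
    apply/matrixP => i j; rewrite mxE !hconj !hLtE.
    case: (eqVneq i j) => [->|ne] //.
    rewrite !mulr0n !sub0r (hB j i) -!sq2.
    have := sqpos i; have := sqpos j => hj hi.
    by field; rewrite !gt_eqF.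
  have hLNi : Lt *m Nhi = Nhi *m Ms by rewrite /Ms !mulmxA hNiN mul1mx.
  have hMcp : char_poly Ms = \prod_(x <- sT) ('X - x%:P).
    by rewrite -hcpT; apply: (char_poly_similar hNi_u).
  have [U [hU1 hU2]] := spectral hMsym hMcp.
  have [_ hUu] := mulmx1_unit hU1.
  exists (P *m (Nhi *m U)); split.
  + rewrite trmx_mul -mulmxA [P^T *m _]mulmxA hN trmx_mul tr_diag_mx.
    rewrite !mulmxA -(mulmxA U^T) -(mulmxA U^T) hNNN mulmx1 hU1 //.
  + move=> j; rewrite !colE.
    have hLV : Lblk *m (P *m (Nhi *m U)) = P *m (Nhi *m U) *m diag_mx (\row_i sT`_i).
      by rewrite mulmxA hLP -mulmxA [Lt *m _]mulmxA hLNi -[Nhi *m Ms *m U]mulmxA hU2 !mulmxA.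
    have hDe : diag_mx (\row_i sT`_i) *m delta_mx j 0 = sT`_j *: (delta_mx j 0 : 'cV[R]_k).
      rewrite mul_diag_mx; apply/matrixP => a b; rewrite !mxE.
      by case: eqVneq => [->|]; rewrite ?mulr1 ?mulr0.
    by rewrite mulmxA hLV -mulmxA hDe -scalemxAr hnthL.
  + by exists (Nhi *m U); rewrite ?unitmx_mul ?hNi_u ?hUu.
- by rewrite ht hdd_b.
- rewrite hDn ht; have := hdd_a (e t); lra.
Qed.
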